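(* Let $\Omega$ be an infinite set, let $1\leq k<i\leq j$ be integers, and let $\Gamma=\Gamma^\Omega_{i,j;\geq k}$. Then for every positive integer $\ell$, every $\ell$-flower of $\Gamma$ is either a $j$-regular star, in which case $\ell=i-k$, or an $i$-regular star, in which case $\ell=j-k$; and both occur (every $j$-regular star is an $(i-k)$-flower and every $i$-regular star is a $(j-k)$-flower). Moreover, $\Gamma$ contains no $\ell$-star for any positive integer $\ell$.
   Context: $\Gamma^\Omega_{i,j;\geq k}$ is the bipartite graph with biparts the $i$-subsets and the $j$-subsets of $\Omega$ (two copies if $i=j$), an $i$-subset adjacent to a $j$-subset iff their intersection has at least $k$ elements. Let $\ell$ be a positive integer and let $\mathcal{A}$ be an infinite set of vertices in one bipart. $\mathcal{A}$ is an $\ell$-star if: (S1) every vertex $v$ of the other bipart is adjacent to exactly $\ell+1$ members of $\mathcal{A}$, or non-adjacent to exactly $\ell$ members of $\mathcal{A}$, or adjacent to no member of $\mathcal{A}$; (S2) for every $(\ell+1)$-subset $A\subset\mathcal{A}$ the number of vertices adjacent to every member of $A$ and to no member of $\mathcal{A}\setminus A$ is finite and nonzero; (S3) for every $\ell$-subset $B\subset\mathcal{A}$ the number of vertices adjacent to no member of $B$ and to every member of $\mathcal{A}\setminus B$ is finite and nonzero. $\mathcal{A}$ is an $\ell$-flower if: (F1) every vertex of the other bipart is adjacent to exactly $\ell+1$ members of $\mathcal{A}$, or to all members, or to none; (F2) as (S2); (F3) infinitely many vertices are adjacent to all members of $\mathcal{A}$. An $i$-regular star is the set of all $i$-subsets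 of $\Omega$ containing a fixed $(i-1)$-subset; a $j$-regular star is defined likewise. *)

(* Defs.v *)
From mathcomp Require Import all_boot.
From mathcomp Require Import finmap.
From mathcomp Require Import boolp classical_sets cardinality.

Set Implicit Arguments.
Unset Strict Implicit.
Unset Printing Implicit Defensive.

Local Open Scope classical_set_scope.
Local Open Scope card_scope.

Section Gamma.
Variable Omega : choiceType.

Definition nsubset (n : nat) : set {fset Omega} :=
  [set X | #|` X|%fset = n].

(* adjacency in Gamma_{i,j;>=k}: an i-subset X and a j-subset Y are
   adjacent iff |X \cap Y| >= k *)
Definition gadj (k : nat) (X Y : {fset Omega}) : Prop :=
  (k <= #|` fsetI X Y|%fset)%N.

Definition regular_star (n : nat) (A : set {fset Omega}) : Prop :=
  exists S : {fset Omega}, #|` S|%fset = n.-1 /\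
    A = [set X | #|` X|%fset = n /\ fsubset S X].
End Gamma.

Section StarFlower.
(* A generic bipartite graph: Apart is the bipart containing the family,
   Bpart the other bipart, adj a b the adjacency between them. *)
Variables (V W : Type) (Apart : set V) (Bpart : set W) (adj : V -> W -> Prop).

Definition adj_exactly (F : set V) (B : set V) : set W :=
  [set w | Bpart w /\ (forall a, B a -> adj a w) /\
           (forall a, F a -> ~ B a -> ~ adj a w)].

Definition nonadj_exactly (F : set V) (B : set V) : set W :=
  [set w | Bpart w /\ (forall a, B a -> ~ adj a w) /\
           (forall a, F a -> ~ B a -> adj a w)].

Definition is_star (l : nat) (F : set V) : Prop :=
  F `<=` Apart /\ infinite_set F /\
  (forall w, Bpart w ->
     [set a | F a /\ adj a w] #= `I_(l.+1) \/
     [set a | F a /\ ~ adj a w] #= `I_l \/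
     (forall a, F a -> ~ adj a w)) /\
  (forall B, B `<=` F -> B #= `I_(l.+1) ->
     finite_set (adj_exactly F B) /\ adj_exactly F B !=set0) /\
  (forall B, B `<=` F -> B #= `I_l ->
     finite_set (nonadj_exactly F B) /\ nonadj_exactly F B !=set0).

Definition is_flower (l : nat) (F : set V) : Prop :=
  F `<=` Apart /\ infinite_set F /\
  (forall w, Bpart w ->
     [set a | F a /\ adj a w] #= `I_(l.+1) \/
     (forall a, F a -> adj a w) \/
     (forall a, F a -> ~ adj a w)) /\
  (forall B, B `<=` F -> B #= `I_(l.+1) ->
     finite_set (adj_exactly F B) /\ adj_exactly F B !=set0) /\
  infinite_set [set w | Bpart w /\ forall a, F a -> adj a w].
End StarFlower.

(* Main.v *)
Require Import Defs.
From mathcomp Require Import all_boot.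
From mathcomp Require Import finmap.
From mathcomp Require Import boolp classical_sets cardinality.
From mathcomp Require Import zify.

Set Implicit Arguments.
Unset Strict Implicit.
Unset Printing Implicit Defensive.

Local Open Scope classical_set_scope.
Local Open Scope card_scope.
Local Open Scope fset_scope.

Section Generic.
Variable U : choiceType.

Lemma inf_sub n (S : set U) : infinite_set S ->
  exists s : {fset U}, ([set` s] `<=` S)%classic /\ #|` s| = n.
Proof.
move=> Sinf; elim: n => [|n [s [sS sn]]].
  by exists fset0; split; [move=> x /=; rewrite inE|rewrite cardfs0].
have : (S `\` [set` s])%classic !=set0.
  by apply: infinite_setN0; apply: infinite_setD.
move=> [x [Sx xs]]; exists (x |` s); split.
  by move=> y /=; rewrite !inE => /orP[/eqP->//|ys]; apply: sS.
by rewrite cardfsU1 sn; move/negP: xs => /= ->.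
Qed.

Lemma inj_finite (V : Type) (A : set U) (f : U -> V) :
  {in A &, injective f} -> finite_set (f @` A) -> finite_set A.
Proof. by move=> fi; rewrite (eq_finite_set (inj_card_eq fi)). Qed.

Lemma set_fin_fset (A : set U) n : A #= `I_n ->
  exists s : {fset U}, A = [set` s] /\ #|` s| = n.
Proof.
move=> An; have : finite_set A by exists n.
move=> /finite_fsetP[s As]; exists s; split => //.
by apply/card_eq_fsetP; rewrite -As.
Qed.

Lemma sub_eq_card (B N : set U) n : (B `<=` N)%classic -> B #= `I_n -> N #= `I_n -> (N `<=` B)%classic.
Proof.
move=> BN /set_fin_fset[sB [BE sBn]] /set_fin_fset[sN [NE sNn]]; subst B N.
have sub : (sB `<=` sN)%fset by apply/fsubsetP => x xB; by have := BN x xB.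
have /eqP E : sB == sN by rewrite -(fsubset_leqif_cards sub) sBn sNn.
by rewrite E.
Qed.

Lemma strict_card (B N : set U) n x : (B `<=` N)%classic -> N x -> ~ B x ->
  B #= `I_n -> N #= `I_n -> False.
Proof. by move=> BN Nx Bx Bn Nn; apply: Bx; apply: (sub_eq_card BN Bn Nn). Qed.



End Generic.

Section Fresh.
Variable T : choiceType.
Hypothesis Tinf : infinite_set [set: T].

Lemma fresh (E : set T) : finite_set E -> exists x, ~ E x.
Proof.
move=> fE; apply: contrapT => H; apply: Tinf.
apply: sub_finite_set fE => x _; apply: contrapT => Hx; by apply: H; exists x.
Qed.

Lemma fresh_fset n (E : set T) : finite_set E ->
  exists W : {fset T}, #|` W| = n /\ forall x, x \in W -> ~ E x.
Proof.
move=> fE; elim: n => [|n [W [Wn WE]]].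
  by exists fset0; split; [rewrite cardfs0|move=> x; rewrite inE].
have fEW : finite_set (E `|` [set` W])%classic by rewrite finite_setU; split.
have [x Hx] := fresh fEW.
exists (x |` W); split.
  rewrite cardfsU1 Wn; suff -> : x \notin W by [].
  by apply/negP => xW; apply: Hx; right.
move=> y; rewrite in_fset1U => /orP[/eqP->|yW]; last exact: WE.
by move=> Ex; apply: Hx; left.
Qed.

Lemma sub_card n (V : {fset T}) : (n <= #|` V|)%N ->
  exists W, W `<=` V /\ #|` W| = n.
Proof.
elim: n => [|n IH] nV.
  by exists fset0; rewrite fsub0set cardfs0.
have [W [WV Wn]] := IH (ltnW nV).
have : ~~ (V `<=` W).
  apply/negP => VW; have := fsubset_leq_card VW; rewrite Wn; lia.
move=> /fsubsetPn[x xV xW]; exists (x |` W); split.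
  by rewrite fsubUset fsub1set xV WV.
by rewrite cardfsU1 xW Wn.
Qed.

Lemma card3 (x y : T) (W : {fset T}) : x != y -> x \notin W -> y \notin W ->
  #|` x |` (y |` W)| = (#|` W|).+2.
Proof.
move=> xy xW yW; rewrite cardfsU1 cardfsU1 yW in_fset1U (negbTE xy) (negbTE xW).
by rewrite /= add1n add1n.
Qed.

Lemma inf_ext (C : {fset T}) (E : set T) (P : set {fset T}) : finite_set E ->
  (forall z, z \notin C -> ~ E z -> P (z |` C)) -> infinite_set P.
Proof.
move=> fE HP Pfin.
pose Z := [set z | z \notin C /\ ~ E z]%classic.
have Zinf : infinite_set Z.
  move=> Zfin; apply: Tinf.
  have : finite_set (Z `|` ([set` C] `|` E))%classic.
    by rewrite !finite_setU; split => //; split.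
  apply: sub_finite_set => x _ /=.
  case: (boolP (x \in C)) => xC; first by right; left.
  by have [Ex|Ex] := pselect (E x); [right; right|left].
apply: Zinf; apply: (@inj_finite _ _ Z (fun z => z |` C)).
  move=> z1 z2; rewrite !inE => -[z1C _] [z2C _] eq.
  have : z1 \in z2 |` C by rewrite -eq fsetU11.
  by rewrite in_fset1U (negbTE z1C) orbF => /eqP.
apply: sub_finite_set Pfin => _ [z [zC zE] <-]; exact: HP.
Qed.

End Fresh.

Definition meets (T : choiceType) (X Z : {fset T}) := exists z, z \in Z /\ z \in X.

Lemma in_fsetS (U : choiceType) (S : set U) x : finite_set S ->
  (x \in fset_set S) <-> S x.
Proof. by move=> fS; rewrite in_fset_set //; split => [/set_mem|/mem_set]. Qed.

Lemma meetsU1 (T : choiceType) (X Z : {fset T}) z :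
  meets X (z |` Z) <-> z \in X \/ meets X Z.
Proof.
split.
  move=> [w [wZ wX]]; move: wZ; rewrite in_fset1U => /orP[/eqP wz|wZ].
    by left; rewrite -wz.
  by right; exists w.
move=> [zX|[w [wZ wX]]]; first by exists z; rewrite fsetU11.
by exists w; rewrite in_fset1U wZ orbT.
Qed.

Section Main.
Variable T : choiceType.
Hypothesis Tinf : infinite_set [set: T].
Variables a b k : nat.
Hypothesis k1 : (1 <= k)%N.
Hypothesis ka : (k < a)%N.
Hypothesis kb : (k < b)%N.

Lemma cardID1 (X C : {fset T}) y :
  #|` X `&` C| = (((y \in X) && (y \in C)) + #|` X `&` (C `\ y)|)%N.
Proof.
rewrite (cardfsD1 y (X `&` C)) in_fsetI; congr (_ + _)%N; congr (#|` _|).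
by apply/fsetP => z; rewrite !inE; case: (z \in X); case: (z \in C); case: (z == y).
Qed.

Lemma pig (H : set {fset T}) (C : {fset T}) : infinite_set H ->
  (forall X, H X -> (k <= #|` X `&` C|)%N) -> (k < #|` C|)%N ->
  exists y, y \in C /\ infinite_set [set X | H X /\ (k <= #|` X `&` (C `\ y)|)%N].
Proof.
move=> Hinf HC kC; apply: contrapT => nE; apply: Hinf.
have : finite_set (\bigcup_(y in [set` C]) [set X | H X /\ (k <= #|` X `&` (C `\ y)|)%N]).
  apply: bigcup_finite => // y yC; apply: contrapT => yinf; apply: nE; by exists y.
apply: sub_finite_set => X HX.
have kXC := HC X HX.
have [ltk|eqk] : (k < #|` X `&` C|)%N \/ k = #|` X `&` C| by lia.
- have : C != fset0 by rewrite -cardfs_gt0; lia.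
  move=> /fset0Pn[y yC]; exists y => //; split => //.
  move: ltk; rewrite (cardID1 X C y); case: (_ && _) => /=; lia.
- have : ~~ (C `<=` X).
    apply/negP => CX; have : X `&` C = C by apply/fsetIidPr.
    move=> E; move: eqk kC; rewrite E => <-; lia.
  move=> /fsubsetPn[y yC yX]; exists y => //; split => //.
  by move: kXC; rewrite (cardID1 X C y) (negbTE yX).
Qed.

Lemma no_star l A : ~ is_star (@nsubset T a) (@nsubset T b) (@gadj T k) l A.
Proof.
move=> [FA [Finf [S1 [S2 S3]]]].
have [sB [sBF sBl]] := inf_sub l Finf.
have Bl : [set` sB] #= `I_l by apply/card_eq_fsetP.
have [Bfin [Y0 [Y0b [Y0B Y0nB]]]] := S3 _ sBF Bl.
have Hinf : infinite_set (A `\` [set` sB])%classic by apply: infinite_setD.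
have kY0 : (k < #|` Y0|)%N by rewrite Y0b.
have [y [yY0 Ginf]] := pig Hinf (fun X HX => Y0nB X HX.1 HX.2) kY0.
set G := [set X | _ /\ _] in Ginf.
have fE : finite_set ([set` Y0] `|` \bigcup_(X in [set` sB]) [set` X])%classic.
  by rewrite finite_setU; split => //; apply: bigcup_finite.
apply: (inf_ext Tinf (C := Y0 `\ y) fE (P := nonadj_exactly (@nsubset T b) (@gadj T k) A [set` sB])) Bfin => z zC zE.
have zY0 : z \notin Y0 by apply/negP => zY; apply: zE; left.
have zX : forall X, X \in sB -> z \notin X.
  by move=> X XB; apply/negP => zX; apply: zE; right; exists X.
have GY : forall X, G X -> gadj k X (z |` (Y0 `\ y)).
  move=> X [_ HX]; rewrite /gadj; apply: leq_trans HX _; apply: fsubset_leq_card.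
  by apply/fsubsetP => w; rewrite !inE => /andP[-> ->]; rewrite orbT.
have BY : forall X, [set` sB] X -> ~ gadj k X (z |` (Y0 `\ y)).
  move=> X XB; have := Y0B X XB; rewrite /gadj => H1 H2; apply: H1.
  apply: leq_trans H2 _; apply: fsubset_leq_card; apply/fsubsetP => w.
  rewrite !inE => /andP[wX /orP[/eqP wz|/andP[_ ->]]]; last by rewrite wX.
  by move: wX; rewrite wz (negbTE (zX X XB)).
split; first by rewrite /nsubset /= cardfsU1 zC add1n (cardfsD1 y Y0) yY0 in Y0b *.
split; first exact: BY.
move=> X AX XnB; apply: contrapT => nadj.
have [X0 GX0] := infinite_setN0 Ginf.
have : nsubset b (z |` (Y0 `\ y)).
  by rewrite /nsubset /= cardfsU1 zC add1n -Y0b (cardfsD1 y Y0) yY0.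
move=> /S1 [H|[H|H]].
- apply: Ginf; apply: sub_finite_set (_ : finite_set [set a0 | A a0 /\ gadj k a0 _]).
    by move=> W GW; split; [exact: GW.1.1|exact: GY].
  by exists l.+1.
- apply: XnB; apply: (sub_eq_card _ Bl H) => //.
  by move=> W WB; split; [exact: sBF|exact: BY].
- by apply: (H X0 GX0.1.1); apply: GY.
Qed.



Lemma card_I_ext (x : T) (S Y : {fset T}) : x \notin S ->
  #|` (x |` S) `&` Y| = ((x \in Y) + #|` S `&` Y|)%N.
Proof.
move=> xS; case: (boolP (x \in Y)) => xY.
  have -> : (x |` S) `&` Y = x |` (S `&` Y).
    by apply/fsetP => w; rewrite !inE; case: (eqVneq w x) => [->|]; rewrite ?xY.
  by rewrite cardfsU1 inE (negbTE xS).
have -> : (x |` S) `&` Y = S `&` Y.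
  apply/fsetP => w; rewrite !inE; case: (eqVneq w x) => [->|] //=.
  by rewrite (negbTE xY) andbF.
by [].
Qed.

Lemma star_elem (S X : {fset T}) : #|` S| = a.-1 -> #|` X| = a -> S `<=` X ->
  exists x, x \notin S /\ X = x |` S.
Proof.
move=> Sa Xa SX.
have : #|` X `\` S| == 1 by rewrite cardfsDS // Xa Sa; apply/eqP; lia.
move=> /cardfs1P[x Ex]; exists x.
have xXS : x \in X `\` S by rewrite Ex inE.
split; first by move: xXS; rewrite inE => /andP[].
apply/fsetP => w; rewrite in_fset1U; apply/idP/idP.
  move=> wX; case: (boolP (w \in S)) => wS; first by rewrite orbT.
  have : w \in X `\` S by rewrite inE wS wX.
  by rewrite Ex inE => ->.
move=> /orP[/eqP->|wS]; first by move: xXS; rewrite inE => /andP[].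
exact: (fsubsetP SX).
Qed.

Lemma star_mem (S : {fset T}) x : #|` S| = a.-1 -> x \notin S ->
  #|` x |` S| = a /\ S `<=` x |` S.
Proof.
move=> Sa xS; split; first by rewrite cardfsU1 xS Sa; lia.
by apply/fsubsetP => w wS; rewrite in_fset1U wS orbT.
Qed.

Lemma star_flower A : regular_star a A ->
  is_flower (@nsubset T a) (@nsubset T b) (@gadj T k) (b - k) A.
Proof.
move=> [S [Sa ->]].
have memA : forall x, x \notin S -> [set X | #|` X| = a /\ S `<=` X] (x |` S).
  by move=> x xS; apply: star_mem.
have elA : forall X, [set X | #|` X| = a /\ S `<=` X] X -> exists x, x \notin S /\ X = x |` S.
  by move=> X [Xa SX]; apply: star_elem.
split; first by move=> X [].
split; first by apply: (inf_ext Tinf (C := S) (finite_set0 T)) => z zS _; apply: memA.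
split.
  move=> Y; rewrite /nsubset /= => Yb.
  have [ge|lt] := leqP k #|` S `&` Y|.
    right; left => X /elA [x [xS ->]]; rewrite /gadj card_I_ext //; lia.
  have [eq|lt2] := eqVneq #|` S `&` Y| k.-1; last first.
    right; right => X /elA [x [xS ->]]; rewrite /gadj card_I_ext //.
    case: (x \in Y) => /=; lia.
  left.
  have -> : [set a0 | [set X | #|` X| = a /\ S `<=` X] a0 /\ gadj k a0 Y] =
            ((fun x => (x |` S)%fset) @` [set` (Y `\` S)%fset])%classic.
    apply/seteqP; split.
      move=> X [/elA [x [xS ->]]]; rewrite /gadj card_I_ext // => H.
      exists x => //=; rewrite inE xS /=; move: H; case: (x \in Y) => //=; lia.
    move=> X [x /=]; rewrite inE => /andP[xS xY] <-; split; first exact: memA.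
    by rewrite /gadj card_I_ext // xY; lia.
  apply: card_eq_trans (inj_card_eq _) _.
    move=> x1 x2 H1 _ E; have x1S : x1 \notin S by have : x1 \in Y `\` S := set_mem H1; rewrite inE => /andP[].
    have : x1 \in x2 |` S by rewrite -E fsetU11.
    by rewrite in_fset1U (negbTE x1S) orbF => /eqP.
  apply/card_eq_fsetP; rewrite cardfsD Yb fsetIC eq; lia.
set A' := [set X | #|` X| = a /\ S `<=` X].
split.
  move=> B BA Bn.
  have [sB [BE sBn]] := set_fin_fset Bn; subst B.
  have [X0 X0B] : exists X0, X0 \in sB.
    by apply/fset0Pn; rewrite -cardfs_gt0 sBn.
  split.
    pose U := S `|` \bigcup_(X <- sB) X.
    apply: (sub_finite_set _ (finite_fset (fpowerset U))).
    move=> Y [Yb [Yadj Ynadj]]; rewrite /= fpowersetE.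
    have [x0 [x0S X0E]] := elA X0 (BA X0 X0B).
    have c1 : (k.-1 <= #|` S `&` Y|)%N.
      have := Yadj X0 X0B; rewrite /gadj X0E card_I_ext //.
      case: (x0 \in Y) => /=; lia.
    apply/fsubsetP => w wY; rewrite in_fsetU.
    case: (boolP (w \in S)) => //= wS.
    have BX : [set` sB] (w |` S).
      apply: contrapT => nB; apply: (Ynadj _ (memA w wS) nB).
      by rewrite /gadj card_I_ext // wY; lia.
    by apply/bigfcupP; exists (w |` S); [rewrite andbT; exact: BX|rewrite fsetU11].
  pose Xset := [set x | x \notin S /\ [set` sB] (x |` S)].
  have XB : Xset #= [set` sB].
    rewrite card_eq_sym.
    have -> : [set` sB] = ((fun x => (x |` S)%fset) @` Xset)%classic.
      apply/seteqP; split.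
        move=> X XB; have [x [xS XE]] := elA X (BA X XB).
        by exists x => //; split => //; rewrite -XE.
      by move=> X [x [_ xB] <-].
    apply: inj_card_eq => x1 x2 H1 _ E.
    have x1S : x1 \notin S by have [] := set_mem H1.
    have : x1 \in x2 |` S by rewrite -E fsetU11.
    by rewrite in_fset1U (negbTE x1S) orbF => /eqP.
  have sBn' : [set` sB] #= `I_(b - k).+1 by apply/card_eq_fsetP.
  have [XS [XSE XSn]] := set_fin_fset (card_eq_trans XB sBn').
  have XSS : forall x, x \in XS -> x \notin S.
    move=> x xX; have : Xset x by rewrite XSE; exact: xX.
    by case.
  have kS : (k.-1 <= #|` S|)%N by rewrite Sa; lia.
  have [S0 [S0S S0n]] := sub_card kS.
  exists (S0 `|` XS).
  have SY : S `&` (S0 `|` XS) = S0.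
    apply/fsetP => w; rewrite !inE; case: (boolP (w \in S0)) => wS0.
      by rewrite (fsubsetP S0S _ wS0).
    rewrite /=; case: (boolP (w \in XS)) => wX; last by rewrite andbF.
    by rewrite (negbTE (XSS w wX)).
  have adjE : forall x, x \notin S -> gadj k (x |` S) (S0 `|` XS) <-> x \in XS.
    move=> x xS; rewrite /gadj card_I_ext // SY S0n in_fsetU.
    have -> : (x \in S0) = false.
      by apply/negbTE/negP => /(fsubsetP S0S); rewrite (negbTE xS).
    split; case: (x \in XS) => //=; lia.
  split.
    rewrite /nsubset /= cardfsU S0n XSn.
    have -> : S0 `&` XS = fset0.
      apply/fsetP => w; rewrite !inE; apply/negP => /andP[wS0 wX].
      by have := XSS w wX; rewrite (fsubsetP S0S _ wS0).
    rewrite cardfs0; lia.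
  split.
    move=> X XB0; have [x [xS XE]] := elA X (BA X XB0); rewrite XE adjE //.
    have : Xset x by split => //; rewrite -XE.
    by rewrite XSE.
  move=> X AX nB; have [x [xS XE]] := elA X AX; rewrite XE adjE // => xX.
  apply: nB; have : Xset x by rewrite XSE; exact: xX.
  by move=> [_]; rewrite XE.
have kS : (k <= #|` S|)%N by rewrite Sa; lia.
have [S1 [S1S S1n]] := sub_card kS.
have [W [Wn WS]] := fresh_fset Tinf (b - k).-1 (finite_fset S).
have dW : S1 `&` W = fset0.
  apply/fsetP => w; rewrite !inE; apply/negP => /andP[wS1 wW].
  by apply: (WS w wW); apply: (fsubsetP S1S).
apply: (inf_ext Tinf (C := S1 `|` W) (finite_fset S)) => z zC zS.
split.
  rewrite /nsubset /= cardfsU1 zC cardfsU dW cardfs0 S1n Wn; lia.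
move=> X [Xa SX]; rewrite /gadj -S1n; apply: fsubset_leq_card.
apply/fsubsetP => w wS1; rewrite !inE (fsubsetP SX _ (fsubsetP S1S _ wS1)) wS1.
by rewrite orbT.
Qed.

Section Flower.
Variable A : set {fset T}.
Variable l : nat.
Hypothesis FA : (A `<=` @nsubset T a)%classic.
Hypothesis Finf : infinite_set A.
Hypothesis F1 : forall w, nsubset b w ->
  [set X | A X /\ gadj k X w] #= `I_(l.+1) \/
  (forall X, A X -> gadj k X w) \/ (forall X, A X -> ~ gadj k X w).
Hypothesis F2 : forall B, (B `<=` A)%classic -> B #= `I_(l.+1) ->
  finite_set (adj_exactly (@nsubset T b) (@gadj T k) A B) /\
  adj_exactly (@nsubset T b) (@gadj T k) A B !=set0.
Hypothesis F3 : infinite_set [set w | nsubset b w /\ forall X, A X -> gadj k X w].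

Lemma infadj Y : nsubset b Y -> infinite_set [set X | A X /\ gadj k X Y] ->
  forall X, A X -> gadj k X Y.
Proof.
move=> Yb Yinf; have [X0 [AX0 adj0]] := infinite_setN0 Yinf.
case: (F1 Yb) => [H|[//|H]]; first by exfalso; apply: Yinf; exists l.+1.
by exfalso; exact: H X0 AX0 adj0.
Qed.

Lemma partial Y X1 X2 : nsubset b Y -> A X1 -> gadj k X1 Y -> A X2 -> ~ gadj k X2 Y ->
  [set X | A X /\ gadj k X Y] #= `I_(l.+1).
Proof.
move=> Yb AX1 a1 AX2 a2; case: (F1 Yb) => [//|[H|H]].
  by exfalso; exact: a2 (H X2 AX2).
by exfalso; exact: H X1 AX1 a1.
Qed.

Lemma meet_desc (C : {fset T}) : (k < #|` C|)%N -> (#|` C| <= b)%N ->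
  (forall X, A X -> (k <= #|` X `&` C|)%N) ->
  exists C', #|` C'| = #|` C|.-1 /\ forall X, A X -> (k <= #|` X `&` C'|)%N.
Proof.
move=> kC Cb HC.
have [y [yC Ginf]] := pig Finf HC kC.
exists (C `\ y); split; first by rewrite (cardfsD1 y C) yC.
move=> X1 AX1; case: (leqP k #|` X1 `&` (C `\ y)|) => // lt1; exfalso.
have fE : finite_set ([set` (C `\ y)%fset] `|` [set` X1])%classic.
  by rewrite finite_setU.
have [W [Wn WE]] := fresh_fset Tinf (b - #|` C `\ y|) fE.
have Yb : nsubset b (C `\ y `|` W).
  rewrite /nsubset /= cardfsU Wn.
  have -> : (C `\ y) `&` W = fset0.
    apply/fsetP => w; rewrite !inE; apply/negP => /andP[/andP[wy wC] wW].
    apply: (WE w wW); by left; rewrite /= !inE wy wC.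
  rewrite cardfs0 (cardfsD1 y C) yC in Cb *; lia.
have Ginf' : infinite_set [set X | A X /\ gadj k X (C `\ y `|` W)].
  apply: sub_infinite_set Ginf => X [AX HX]; split => //.
  rewrite /gadj; apply: leq_trans HX _; apply: fsubset_leq_card.
  by apply/fsubsetP => w; rewrite !inE => /andP[-> ->].
have := infadj Yb Ginf' AX1; rewrite /gadj.
have -> : X1 `&` (C `\ y `|` W) = X1 `&` (C `\ y).
  apply/fsetP => w; rewrite !inE; case: (boolP (w \in W)) => wW; last by rewrite orbF.
  have : w \notin X1 by apply/negP => wX; apply: (WE w wW); right.
  by move=> /negbTE ->.
lia.
Qed.

Lemma common_k : exists D : {fset T}, #|` D| = k /\ forall X, A X -> D `<=` X.
Proof.
have [Y0 [Y0b Y0adj]] := infinite_setN0 F3.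
have H : forall n, (n <= b - k)%N -> exists C : {fset T}, #|` C| = (b - n)%N /\
    forall X, A X -> (k <= #|` X `&` C|)%N.
  elim => [_|n IH le]; first by exists Y0; rewrite subn0.
  have [C [Cn HC]] := IH (ltnW le).
  have h1 : (k < #|` C|)%N by rewrite Cn; lia.
  have h2 : (#|` C| <= b)%N by rewrite Cn; lia.
  have [C' [C'n HC']] := meet_desc h1 h2 HC.
  by exists C'; split => //; rewrite C'n Cn; lia.
have [D [Dn HD]] := H (b - k)%N (leqnn _).
exists D; split; first by rewrite Dn; lia.
have Dk : #|` D| = k by rewrite Dn; lia.
move=> X AX; have le := HD X AX.
have sub : X `&` D `<=` D by apply: fsubsetIr.
have : X `&` D == D.
  by rewrite -(fsubset_leqif_cards sub).2 eqn_leq (fsubset_leq_card sub) /= Dk.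
by move=> /eqP <-; apply: fsubsetIl.
Qed.

Lemma max_common : exists K : {fset T}, (k <= #|` K|)%N /\
  (forall X, A X -> K `<=` X) /\ (forall x, x \notin K -> exists X, A X /\ x \notin X).
Proof.
have [D [Dn HD]] := common_k.
have [X0 AX0] := infinite_setN0 Finf.
have X0a : #|` X0| = a := FA AX0.
suff H : forall n K, (a - #|` K| <= n)%N -> (k <= #|` K|)%N ->
    (forall X, A X -> K `<=` X) -> exists K' : {fset T}, (k <= #|` K'|)%N /\
  (forall X, A X -> K' `<=` X) /\ (forall x, x \notin K' -> exists X, A X /\ x \notin X).
  by apply: (H a D) => //; [exact: leq_subr|rewrite Dn].
elim => [|n IH] K le kK HK;
  (case: (pselect (forall x, x \notin K -> exists X, A X /\ x \notin X)) => [H|H];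
    first by exists K);
  (have [x [xK Hx]] : exists x, x \notin K /\ forall X, A X -> x \in X by
    apply: contrapT => nH; apply: H => x xK; apply: contrapT => nE; apply: nH;
    exists x; split => // X AX; apply: contrapT => nX; apply: nE; exists X;
    split => //; apply/negP);
  (have HK' : forall X, A X -> x |` K `<=` X by
    move=> X AX; rewrite fsubUset fsub1set Hx // HK);
  have K'a : (#|` x |` K| <= a)%N by rewrite -X0a; apply: fsubset_leq_card; apply: HK'.
  by move: K'a; rewrite cardfsU1 xK; lia.
apply: (IH (x |` K)) => //; move: K'a; rewrite cardfsU1 xK; lia.
Qed.

Section WithK.
Variable K : {fset T}.
Hypothesis kK : (k <= #|` K|)%N.
Hypothesis HK : forall X, A X -> K `<=` X.
Hypothesis Kmax : forall x, x \notin K -> exists X, A X /\ x \notin X.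
Variable K0 : {fset T}.
Hypothesis K0K : K0 `<=` K.
Hypothesis K0n : #|` K0| = k.-1.

Definition outK (Z : {fset T}) := forall z, z \in Z -> z \notin K.

Lemma cardKZ Z : outK Z -> #|` K0 `|` Z| = (k.-1 + #|` Z|)%N.
Proof.
move=> oZ; rewrite cardfsU K0n.
have -> : K0 `&` Z = fset0.
  apply/fsetP => w; rewrite !inE; apply/negP => /andP[w0 wZ].
  by have := oZ w wZ; rewrite (fsubsetP K0K _ w0).
by rewrite cardfs0 subn0.
Qed.

Lemma adjZ (X Z : {fset T}) : A X -> outK Z -> gadj k X (K0 `|` Z) <-> meets X Z.
Proof.
move=> AX oZ; rewrite /gadj.
have -> : X `&` (K0 `|` Z) = K0 `|` (X `&` Z).
  apply/fsetP => w; rewrite !inE; case: (boolP (w \in K0)) => w0 //=.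
  by rewrite (fsubsetP (HK AX) _ (fsubsetP K0K _ w0)).
rewrite cardfsU K0n.
have -> : K0 `&` (X `&` Z) = fset0.
  apply/fsetP => w; rewrite !inE; apply/negP => /andP[w0 /andP[_ wZ]].
  by have := oZ w wZ; rewrite (fsubsetP K0K _ w0).
rewrite cardfs0 subn0; split.
  move=> H; have : X `&` Z != fset0 by rewrite -cardfs_gt0; lia.
  by move=> /fset0Pn[z]; rewrite !inE => /andP[zX zZ]; exists z.
move=> [z [zZ zX]]; have : (0 < #|` X `&` Z|)%N.
  by rewrite cardfs_gt0; apply/fset0Pn; exists z; rewrite !inE zX zZ.
lia.
Qed.

Lemma degfin x : x \notin K -> finite_set [set X | A X /\ x \in X].
Proof.
move=> xK; have [X' [AX' xX']] := Kmax xK.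
have fE : finite_set ([set` K] `|` [set` X'] `|` [set x])%classic.
  by rewrite !finite_setU; split => //; split.
have [W [Wn WE]] := fresh_fset Tinf (b - k) fE.
have oZ : outK (x |` W).
  move=> z; rewrite in_fset1U => /orP[/eqP->//|zW].
  by apply/negP => zK; apply: (WE z zW); left; left.
have xW : x \notin W by apply/negP => xW; apply: (WE x xW); right.
have Yb : nsubset b (K0 `|` (x |` W)).
  by rewrite /nsubset /= cardKZ // cardfsU1 xW Wn; lia.
case: (F1 Yb) => [H|[H|H]].
- have Hfin : finite_set [set X | A X /\ gadj k X (K0 `|` (x |` W))] by exists l.+1.
  apply: sub_finite_set Hfin => X [AX xX]; split => //; apply/(adjZ AX oZ); exists x; split => //.
  exact: fsetU11.
- exfalso; have := H X' AX'; move/(adjZ AX' oZ) => [z [zZ zX']].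
  move: zZ; rewrite in_fset1U => /orP[/eqP zx|zW]; first by move: zX'; rewrite zx (negbTE xX').
  by apply: (WE z zW); left; right.
- apply: sub_finite_set (finite_set0 _) => X [AX xX]; apply: (H X AX).
  by apply/(adjZ AX oZ); exists x; split => //; exact: fsetU11.
Qed.

Lemma fZfin Z : outK Z -> finite_set [set X | A X /\ meets X Z].
Proof.
move=> oZ.
apply: (sub_finite_set (B := \bigcup_(z in [set` Z]) [set X | A X /\ z \in X])).
  by move=> X [AX [z [zZ zX]]]; exists z.
by apply: bigcup_finite => // z zZ; apply: degfin; apply: oZ.
Qed.

Lemma partialZ Z X1 : outK Z -> #|` Z| = (b - k).+1 -> A X1 -> meets X1 Z ->
  [set X | A X /\ meets X Z] #= `I_(l.+1).
Proof.
move=> oZ Zn AX1 m1.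
have Yb : nsubset b (K0 `|` Z) by rewrite /nsubset /= cardKZ // Zn; lia.
have [X2 [AX2 nm2]] : exists X2, A X2 /\ ~ meets X2 Z.
  have [X2 [AX2 nm2]] := infinite_setN0 (infinite_setD Finf (fZfin oZ)).
  by exists X2; split => // m2; apply: nm2.
have -> : [set X | A X /\ meets X Z] = [set X | A X /\ gadj k X (K0 `|` Z)].
  by apply/seteqP; split => X [AX H]; split => //; apply/(adjZ AX oZ).
apply: (partial Yb AX1 _ AX2); first by apply/(adjZ AX1 oZ).
by move/(adjZ AX2 oZ).
Qed.

Lemma Ksmall : (#|` K| < a)%N.
Proof.
case: (ltnP #|` K| a) => // aK; exfalso; apply: Finf.
apply: (sub_finite_set (B := [set K])) => [X AX|]; last exact: finite_set1.
have sub := HK AX; have Xa : #|` X| = a := FA AX.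
have : K == X by rewrite -(fsubset_leqif_cards sub).2 eqn_leq (fsubset_leq_card sub) Xa aK.
by move=> /eqP ->.
Qed.

Lemma outside X : A X -> exists x, x \in X /\ x \notin K.
Proof.
move=> AX; have Xa : #|` X| = a := FA AX.
have : ~~ (X `<=` K).
  by apply/negP => XK; have := fsubset_leq_card XK; rewrite Xa; have := Ksmall; lia.
by move=> /fsubsetPn[x xX xK]; exists x.
Qed.

Definition dset x := [set X | A X /\ x \in X].

Lemma Kbig : #|` K| = a.-1.
Proof.
have Ksm := Ksmall.
have [lt|//] : (#|` K| < a.-1)%N \/ #|` K| = a.-1 by lia.
exfalso.
pose P := fun n => `[< exists x, x \notin K /\ (exists X, A X /\ x \in X) /\
                        #|` fset_set (dset x)| = n >].
have Pex : exists n, P n.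
  have [X0 AX0] := infinite_setN0 Finf; have [x0 [x0X0 x0K]] := outside AX0.
  by exists #|` fset_set (dset x0)|; apply/asboolP; exists x0; split => //; split => //; exists X0.
case: (ex_minnP Pex) => δ /asboolP [q [qK [[X1 [AX1 qX1]] degq]]] δmin.
have [p [pX1 [pK pq]]] : exists p, p \in X1 /\ p \notin K /\ p != q.
  have X1a : #|` X1| = a := FA AX1.
  have : (1 < #|` X1 `\` K|)%N by rewrite cardfsDS ?HK // X1a; lia.
  rewrite (cardfsD1 q (X1 `\` K)) => H.
  have : (X1 `\` K) `\ q != fset0 by rewrite -cardfs_gt0; move: H; case: (_ \in _) => /=; lia.
  move=> /fset0Pn[p]; rewrite !inE => /andP[pq /andP[pK pX1]].
  by exists p.
have fp := degfin pK; have fq := degfin qK.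
pose Fq := (\bigcup_(X in (dset p `|` dset q)) [set` X])%classic.
have Fqfin : finite_set Fq by apply: bigcup_finite => //; rewrite finite_setU.
pose M1 := (\bigcup_(w in (Fq `\` [set` K])) dset w)%classic.
have M1fin : finite_set M1.
  apply: bigcup_finite; first exact: finite_setD.
  by move=> w [_ wK]; apply: degfin; apply/negP.
have [X2 [AX2 X2M1]] := infinite_setN0 (infinite_setD Finf M1fin).
have [e [eX2 eK]] := outside AX2.
have far : forall X, A X -> e \in X -> ~ (dset p `|` dset q)%classic X.
  move=> X AX eX H; apply: X2M1; exists e; last by split.
  split; last by move=> /= eK'; move: eK; rewrite eK'.
  by exists X.
have fe := degfin eK.
pose Fe := (\bigcup_(X in (dset p `|` dset q `|` dset e)) [set` X])%classic.
have Fefin : finite_set Fe by apply: bigcup_finite => //; rewrite !finite_setU.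
have fE : finite_set ([set` K] `|` Fe)%classic by rewrite finite_setU.
have [W [Wn WE]] := fresh_fset Tinf (b - k).-1 fE.
have inFe : forall x X, A X -> x \in X -> (dset p `|` dset q `|` dset e)%classic X -> Fe x.
  by move=> x X AX xX H; exists X.
have pW : p \notin W by apply/negP => pW; apply: (WE p pW); right; apply: (inFe p X1) => //; left; left.
have qW : q \notin W by apply/negP => qW; apply: (WE q qW); right; apply: (inFe q X1) => //; left; right.
have eW : e \notin W by apply/negP => eW; apply: (WE e eW); right; apply: (inFe e X2) => //; right.
have wfar : forall w X, w \in W -> A X -> w \in X -> ~ (dset p `|` dset q `|` dset e)%classic X.
  by move=> w X wW AX wX H; apply: (WE w wW); right; apply: (inFe w X).
have oW : outK W by move=> w wW; apply/negP => wK; apply: (WE w wW); left.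
have oZa : outK (p |` (q |` W)).
  by move=> z; rewrite !in_fset1U => /orP[/eqP->//|/orP[/eqP->//|]]; apply: oW.
have oZb : outK (p |` (e |` W)).
  by move=> z; rewrite !in_fset1U => /orP[/eqP->//|/orP[/eqP->//|]]; apply: oW.
have ep : e != p.
  by apply/negP => /eqP epE; apply: (far X1 AX1); [rewrite epE|left; split].
have Zan : #|` p |` (q |` W)| = (b - k).+1.
  have bk : (0 < b - k)%N by rewrite subn_gt0.
  by rewrite card3 // Wn prednK.
have Zbn : #|` p |` (e |` W)| = (b - k).+1.
  have bk : (0 < b - k)%N by rewrite subn_gt0.
  have pe : p != e by rewrite eq_sym.
  by rewrite card3 // Wn prednK.
have mX1a : meets X1 (p |` (q |` W)) by exists p; rewrite fsetU11.
have mX1b : meets X1 (p |` (e |` W)) by exists p; rewrite fsetU11.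
have Na := partialZ oZa Zan AX1 mX1a.
have Nb := partialZ oZb Zbn AX1 mX1b.
have fW := fZfin oW.
pose sp := fset_set (dset p); pose sq := fset_set (dset q); pose se := fset_set (dset e).
pose sW := fset_set [set X | A X /\ meets X W].
have Ea : [set X | A X /\ meets X (p |` (q |` W))] = [set` (sp `|` sq `|` sW)].
  apply/seteqP; split => X.
    move=> [AX /meetsU1 [pX|/meetsU1 [qX|mW]]]; rewrite /= !in_fsetU.
    + by rewrite (in_fsetS _ fp).2.
    + by rewrite (in_fsetS _ fq).2 ?orbT.
    + by rewrite (in_fsetS _ fW).2 ?orbT.
  rewrite /= !in_fsetU => /orP[/orP[|]|].
  + by move=> /(in_fsetS _ fp) [AX pX]; split => //; apply/meetsU1; left.
  + by move=> /(in_fsetS _ fq) [AX qX]; split => //; apply/meetsU1; right; apply/meetsU1; left.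
  + by move=> /(in_fsetS _ fW) [AX mW]; split => //; apply/meetsU1; right; apply/meetsU1; right.
have Eb : [set X | A X /\ meets X (p |` (e |` W))] = [set` (sp `|` se `|` sW)].
  apply/seteqP; split => X.
    move=> [AX /meetsU1 [pX|/meetsU1 [qX|mW]]]; rewrite /= !in_fsetU.
    + by rewrite (in_fsetS _ fp).2.
    + by rewrite (in_fsetS _ fe).2 ?orbT.
    + by rewrite (in_fsetS _ fW).2 ?orbT.
  rewrite /= !in_fsetU => /orP[/orP[|]|].
  + by move=> /(in_fsetS _ fp) [AX pX]; split => //; apply/meetsU1; left.
  + by move=> /(in_fsetS _ fe) [AX qX]; split => //; apply/meetsU1; right; apply/meetsU1; left.
  + by move=> /(in_fsetS _ fW) [AX mW]; split => //; apply/meetsU1; right; apply/meetsU1; right.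
rewrite Ea in Na; rewrite Eb in Nb.
move/card_eq_fsetP: Na => Na; move/card_eq_fsetP: Nb => Nb.
have D1 : (sp `|` sq) `&` sW = fset0.
  apply/fsetP => X; rewrite !inE; apply/negP => /andP[/orP[H|H] /(in_fsetS _ fW) [AX [w [wW wX]]]].
    by apply: (wfar w X wW AX wX); left; left; apply/(in_fsetS _ fp).
  by apply: (wfar w X wW AX wX); left; right; apply/(in_fsetS _ fq).
have D2 : (sp `|` se) `&` sW = fset0.
  apply/fsetP => X; rewrite !inE; apply/negP => /andP[/orP[H|H] /(in_fsetS _ fW) [AX [w [wW wX]]]].
    by apply: (wfar w X wW AX wX); left; left; apply/(in_fsetS _ fp).
  by apply: (wfar w X wW AX wX); right; apply/(in_fsetS _ fe).
have D3 : sp `&` se = fset0.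
  apply/fsetP => X; rewrite !inE; apply/negP => /andP[/(in_fsetS _ fp) [AX pX] /(in_fsetS _ fe) [_ eX]].
  by apply: (far X AX eX); left.
have I1 : (0 < #|` sp `&` sq|)%N.
  rewrite cardfs_gt0; apply/fset0Pn; exists X1; rewrite inE.
  by rewrite (in_fsetS _ fp).2 // (in_fsetS _ fq).2.
have mine : (δ <= #|` se|)%N.
  by apply: δmin; apply/asboolP; exists e; split => //; split => //; exists X2.
have u1 := cardfsUI (sp `|` sq) sW; have u2 := cardfsUI (sp `|` se) sW.
have u3 := cardfsUI sp sq; have u4 := cardfsUI sp se.
rewrite D1 cardfs0 in u1; rewrite D2 cardfs0 in u2; rewrite D3 cardfs0 in u4.
rewrite -/sq degq in u3.
clear -u1 u2 u3 u4 I1 mine Na Nb; lia.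
Qed.

Lemma flower_star : regular_star a A /\ l = (b - k)%N.
Proof.
have Ka := Kbig.
have elA : forall X, A X -> exists x, x \notin K /\ X = x |` K.
  by move=> X AX; apply: star_elem => //; [exact: FA|exact: HK].
pose XA := [set x | x \notin K /\ A (x |` K)].
have XAinf : infinite_set XA.
  move=> XAfin; apply: Finf.
  apply: (sub_finite_set (B := ((fun x => (x |` K)%fset) @` XA)%classic)).
    move=> X AX; have [x [xK XE]] := elA X AX.
    by exists x => //; split => //; rewrite -XE.
  exact: finite_image.
have bk : (0 < b - k)%N by rewrite subn_gt0.
have [V [VXA Vn]] := inf_sub (b - k).+1 XAinf.
have oV : outK V by move=> x xV; have [] := VXA x xV.
have ext_meets : forall x Z, x \notin K -> outK Z -> meets (x |` K) Z -> x \in Z.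
  move=> x Z xK oZ [z [zZ]]; rewrite in_fset1U => /orP[/eqP <-//|zK].
  by have := oZ z zZ; rewrite zK.
have N2E : [set X | A X /\ meets X V] = ((fun x => (x |` K)%fset) @` [set` V])%classic.
  apply/seteqP; split.
    move=> X [AX mX]; have [x [xK XE]] := elA X AX.
    by exists x; [apply: (ext_meets x V xK oV); rewrite -XE|rewrite XE].
  move=> X [x xV <-]; split; first by have [] := VXA x xV.
  by exists x; rewrite fsetU11.
have [v0 v0V] : exists v0, v0 \in V by apply/fset0Pn; rewrite -cardfs_gt0 Vn.
have [v0K Av0] := VXA v0 v0V.
have N2 : [set X | A X /\ meets X V] #= `I_(l.+1).
  by apply: (partialZ oV Vn Av0); exists v0; rewrite fsetU11.
have imV : ((fun x => (x |` K)%fset) @` [set` V])%classic #= `I_(b - k).+1.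
  apply: card_eq_trans (inj_card_eq _) _.
    move=> x1 x2 H1 _ E; have [x1K _] := VXA x1 (set_mem H1).
    have : x1 \in x2 |` K by rewrite -E fsetU11.
    by rewrite in_fset1U (negbTE x1K) orbF => /eqP.
  by apply/card_eq_fsetP.
have ll : l = (b - k)%N.
  rewrite N2E in N2; have := card_eq_trans (card_esym N2) imV.
  by move/card_eq_II => [].
split => //; exists K; split => //.
apply/seteqP; split; first by move=> X AX; split; [exact: FA|exact: HK].
move=> X [Xa KX]; have [xs [xsK XE]] := star_elem Ka Xa KX; subst X.
apply: contrapT => nA.
have xsV : xs \notin V by apply/negP => xsV; have [] := VXA xs xsV.
pose V' := V `\ v0.
have V'n : #|` V'| = (b - k)%N by move: Vn; rewrite (cardfsD1 v0 V) v0V add1n => -[].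
have oZa : outK (xs |` V').
  move=> z; rewrite in_fset1U => /orP[/eqP->//|]; rewrite inE => /andP[_ zV].
  exact: oV.
have xsV' : xs \notin V' by rewrite inE negb_and xsV orbT.
have Zan : #|` xs |` V'| = (b - k).+1 by rewrite cardfsU1 xsV' V'n.
have [v1 v1V'] : exists v1, v1 \in V' by apply/fset0Pn; rewrite -cardfs_gt0 V'n.
have v1V : v1 \in V by move: v1V'; rewrite inE => /andP[].
have [v1K Av1] := VXA v1 v1V.
have N1 : [set X | A X /\ meets X (xs |` V')] #= `I_(l.+1).
  by apply: (partialZ oZa Zan Av1); exists v1; rewrite fsetU11 in_fset1U v1V' orbT.
apply: (strict_card (x := v0 |` K) _ _ _ N1 N2).
- move=> X [AX mX]; split => //; have [x [xK XE]] := elA X AX; subst X.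
  have := ext_meets x _ xK oZa mX; rewrite in_fset1U => /orP[/eqP xxs|xV'].
    by exfalso; apply: nA; rewrite -xxs.
  by exists x; split; [move: xV'; rewrite inE => /andP[]|rewrite fsetU11].
- by split => //; exists v0; rewrite fsetU11.
- move=> [_ m0]; have := ext_meets v0 _ v0K oZa m0.
  rewrite in_fset1U => /orP[/eqP v0xs|].
    by move: xsV; rewrite -v0xs v0V.
  by rewrite /V' !inE eqxx.
Qed.

End WithK.

End Flower.

Lemma flower_gen l A : is_flower (@nsubset T a) (@nsubset T b) (@gadj T k) l A ->
  regular_star a A /\ l = (b - k)%N.
Proof.
move=> [FA [Finf [F1 [F2 F3]]]].
have [K [kK [HK Kmax]]] := max_common FA Finf F1 F3.
have kK' : (k.-1 <= #|` K|)%N by lia.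
have [K0 [K0K K0n]] := sub_card kK'.
exact: (flower_star FA Finf F1 kK HK Kmax K0K K0n).
Qed.

End Main.

Local Close Scope fset_scope.

Theorem proposition4p6 (Omega : choiceType) (i j k : nat) :
  infinite_set [set: Omega] -> (1 <= k)%N -> (k < i)%N -> (i <= j)%N ->
  (forall l : nat, (0 < l)%N ->
     (forall A : set {fset Omega},
        is_flower (@nsubset Omega i) (@nsubset Omega j) (@gadj Omega k) l A ->
        regular_star i A /\ l = (j - k)%N) /\
     (forall A : set {fset Omega},
        is_flower (@nsubset Omega j) (@nsubset Omega i)
          (fun Y X => @gadj Omega k X Y) l A ->
        regular_star j A /\ l = (i - k)%N)) /\
  (forall A : set {fset Omega}, regular_star j A ->
     is_flower (@nsubset Omega j) (@nsubset Omega i)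
       (fun Y X => @gadj Omega k X Y) (i - k)%N A) /\
  (forall A : set {fset Omega}, regular_star i A ->
     is_flower (@nsubset Omega i) (@nsubset Omega j) (@gadj Omega k) (j - k)%N A) /\
  (forall l : nat, (0 < l)%N ->
     (forall A : set {fset Omega},
        ~ is_star (@nsubset Omega i) (@nsubset Omega j) (@gadj Omega k) l A) /\
     (forall A : set {fset Omega},
        ~ is_star (@nsubset Omega j) (@nsubset Omega i)
            (fun Y X => @gadj Omega k X Y) l A)).
Proof.
move=> Tinf k1 ki ij.
have kj : (k < j)%N by lia.
have flipE : (fun Y X => @gadj Omega k X Y) = @gadj Omega k.
  by apply: funext => Y; apply: funext => X; rewrite /gadj fsetIC.
rewrite flipE.
split.
  move=> l _; split => A.
    exact: (flower_gen Tinf k1 ki kj).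
  exact: (flower_gen Tinf k1 kj ki).
split; first by move=> A; exact: (star_flower Tinf k1 kj ki).
split; first by move=> A; exact: (star_flower Tinf k1 ki kj).
move=> l _; split => A.
  exact: (no_star Tinf k1 ki kj).
exact: (no_star Tinf k1 kj ki).
Qed.
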